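(* There exists a function $f\colon\mathbb{N}\to\mathbb{N}$ such that for every positive integer $n$ and each of the four constructions $Q\in\{Q(\mathscr{M}^{KI}),Q(\mathscr{M}^{KK}),Q(\mathscr{A}^{KK}),Q(\mathscr{H}^{KK})\}$, we have $\mathsf{rw}(Q_{f(n)}(\cdot_{f(n)}))\ge n$, i.e. $\mathsf{rw}(Q_{f(n)}(\mathscr{M}^{KI}_{f(n)}))$, $\mathsf{rw}(Q_{f(n)}(\mathscr{M}^{KK}_{f(n)}))$, $\mathsf{rw}(Q_{f(n)}(\mathscr{A}^{KK}_{f(n)}))$ and $\mathsf{rw}(Q_{f(n)}(\mathscr{H}^{KK}_{f(n)}))$ are all at least $n$.
   Context: Let $X^1,\dots,X^k$ be pairwise disjoint ordered sets $X^j=\{x^j_1,\dots,x^j_m\}$, and let $y^1,\dots,y^k,z^1,\dots,z^{k-1}$ be further distinct vertices. For ordered sets $X,Y$ of size $m$: $\mathcal{M}(X,Y)$ has edges $x_iy_i$, $\mathcal{A}(X,Y)$ has edges $x_iy_j$ ($i\ne j$), $\mathcal{H}(X,Y)$ has edges $x_iy_j$ ($i\le j$); $K(S)$ is the clique on $S$, $K(S,T)$ the complete bipartite graph between $S,T$; unions take unions of vertex and edge sets. Define $Q_k(\mathscr{M}^{KK}_m)=\bigcup_{i\in[k-1]}\mathcal{M}(X^i,X^{i+1})\cup\bigcup_{i\in[k]}K(\{y^i\}\cup X^i)$; $Q_k(\mathscr{M}^{KI}_m)=\bigcup_{i\in[k-1]}\mathcal{M}(X^i,X^{i+1})\cup\bigcup_{i\in[\lceil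 k/2\rceil]}K(\{y^{2i-1}\}\cup X^{2i-1})$; $Q_k(\mathscr{H}^{KK}_m)=\bigcup_{i\in[k-1]}\mathcal{H}(X^i,X^{i+1})\cup\bigcup_{i\in[k]}K(\{y^i\}\cup X^i)$; $Q_k(\mathscr{A}^{KK}_m)=\bigcup_{i\in[k-1]}\mathcal{A}(X^i,X^{i+1})\cup\bigcup_{i\in[k]}K(\{y^i\}\cup X^i)\cup\bigcup_{i\in[k-1]}K(\{z^i\},X^i\cup X^{i+1})$. Rankwidth $\mathsf{rw}(G)$: the cutrank of $X\subseteq V(G)$ is the $\mathbb{F}_2$-rank of the adjacency submatrix with rows $X$ and columns $V(G)\setminus X$; a rank-decomposition is a tree with internal nodes of degree $3$ and a bijection from its leaves to $V(G)$; its width is the maximum over tree edges of the cutrank of the vertices mapped to one side; $\mathsf{rw}(G)$ is the minimum width. *)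

(* Defs.v *)
From mathcomp Require Import all_boot all_order all_algebra.
Set Implicit Arguments. Unset Strict Implicit. Unset Printing Implicit Defensive.
Import GRing.Theory.
Local Open Scope ring_scope.

(** * Rank-width of a simple graph (V, adj), adj symmetric irreflexive *)
Section Rankwidth.
Variables (V : finType) (adj : rel V).

Definition cutrank (X : {set V}) : nat :=
  \rank (\matrix_(i < #|X|, j < #|~: X|)
           ((adj (enum_val i) (enum_val j) : nat)%:R : 'F_2)).

Definition tdel (T : finType) (t : rel T) (a b : T) : rel T :=
  [rel x y | t x y && ~~ (((x == a) && (y == b)) || ((x == b) && (y == a)))].

Definition side (T : finType) (t : rel T) (a b : T) : {set T} :=
  [set x | connect (tdel t a b) a x].

Definition degree (T : finType) (t : rel T) (x : T) : nat := #|[set y | t x y]|.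

Definition is_rank_decomposition (T : finType) (t : rel T) (phi : V -> T) : Prop :=
  [/\ symmetric t /\ irreflexive t,
      (forall a b, connect t a b),
      (forall a b, t a b -> ~~ connect (tdel t a b) a b),
      injective phi &
      (forall x, if x \in codom phi then degree t x <= 1 else degree t x == 3)]%N.

Definition rd_width (T : finType) (t : rel T) (phi : V -> T) : nat :=
  \max_(p : T * T | t p.1 p.2) cutrank [set v | phi v \in side t p.1 p.2].

Definition rw_ge (n : nat) : Prop :=
  forall (T : finType) (t : rel T) (phi : V -> T),
    is_rank_decomposition t phi -> (n <= rd_width t phi)%N.

End Rankwidth.

(** Vertices: inl (inl (j,i)) = x^{j+1}_{i+1}; inl (inr j) = y^{j+1};
    inr j = z^{j+1} (only j < k-1 is used).  0-indexed. *)
Definition vtx (k m : nat) := (('I_k * 'I_m) + 'I_k + 'I_k)%type.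

Section Constructions.
Variables k m : nat.

(** clique edges of K({y^j} u X^j) for the j with [sel j] (directed form) *)
Definition clique_e (sel : 'I_k -> bool) (u v : vtx k m) : bool :=
  match u, v with
  | inl (inl (j, i)), inl (inl (j', i')) => (j == j') && (i != i') && sel j
  | inl (inr j), inl (inl (j', _)) => (j == j') && sel j
  | _, _ => false
  end.

Definition layer_e (P : nat -> nat -> bool) (u v : vtx k m) : bool :=
  match u, v with
  | inl (inl (j, i)), inl (inl (j', i')) => (j.+1 == j' :> nat) && P i i'
  | _, _ => false
  end.

(** K({z^j}, X^j u X^{j+1}) for j in [k-1] *)
Definition z_e (u v : vtx k m) : bool :=
  match u, v with
  | inr j, inl (inl (j', _)) => (j < k.-1)%N && ((j' == j :> nat) || (j' == j.+1 :> nat))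
  | _, _ => false
  end.

Definition inV_noz (v : vtx k m) : bool :=
  match v with inr _ => false | _ => true end.
Definition inV_KI (v : vtx k m) : bool :=
  match v with inr _ => false | inl (inr j) => ~~ odd j | _ => true end.
Definition inV_A (v : vtx k m) : bool :=
  match v with inr j => (j < k.-1)%N | _ => true end.

Definition E_MKK u v := layer_e (fun i i' => i == i') u v || clique_e predT u v.
Definition E_MKI u v := layer_e (fun i i' => i == i') u v
                        || clique_e (fun j => ~~ odd j) u v.
Definition E_HKK u v := layer_e (fun i i' => (i <= i')%N) u v || clique_e predT u v.
Definition E_AKK u v := [|| layer_e (fun i i' => i != i') u v, clique_e predT u v
                        | z_e u v].

End Constructions.

Definition QV (k m : nat) (P : pred (vtx k m)) := {v : vtx k m | P v}.
Definition Qadj (k m : nat) (P : pred (vtx k m)) (E : rel (vtx k m)) : rel (QV P) :=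
  fun u v => E (val u) (val v) || E (val v) (val u).

Definition Q_MKI k m := @Qadj k m (@inV_KI k m) (@E_MKI k m).
Definition Q_MKK k m := @Qadj k m (@inV_noz k m) (@E_MKK k m).
Definition Q_AKK k m := @Qadj k m (@inV_A k m) (@E_AKK k m).
Definition Q_HKK k m := @Qadj k m (@inV_noz k m) (@E_HKK k m).
Arguments Q_MKI : clear implicits.
Arguments Q_MKK : clear implicits.
Arguments Q_AKK : clear implicits.
Arguments Q_HKK : clear implicits.

(* Main.v *)
Require Import Defs.
From mathcomp Require Import all_boot all_order all_algebra.
From mathcomp Require Import zify.
Set Implicit Arguments. Unset Strict Implicit. Unset Printing Implicit Defensive.
Import GRing.Theory.

Module MTree.

Lemma connect_ind_pred (T : finType) (e : rel T) (x : T) (P : T -> Prop) :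
  P x -> (forall y z, connect e x y -> P y -> e y z -> P z) ->
  forall y, connect e x y -> P y.
Proof.
move=> Px step y /connectP [p pth ->].
elim/last_ind: p pth => [|p z IH] //=.
rewrite rcons_path => /andP[pp ez]; rewrite last_rcons.
apply: (step (last x p)) => //; first by apply/connectP; exists p.
exact: IH.
Qed.

Section Tree.
Variables (V T : finType) (t : rel T) (phi : V -> T).
Hypothesis tsym : symmetric t.
Hypothesis tirr : irreflexive t.
Hypothesis tconn : forall a b, connect t a b.
Hypothesis tbridge : forall a b, t a b -> ~~ connect (tdel t a b) a b.
Hypothesis phi_inj : injective phi.
Hypothesis tdeg : forall x, if x \in codom phi then (degree t x <= 1)%N else degree t x == 3.

Lemma side_root a b : a \in side t a b.
Proof. by rewrite inE connect0. Qed.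

Lemma side_step a b y z : y \in side t a b -> tdel t a b y z -> z \in side t a b.
Proof.
rewrite !inE => hy hyz; apply: connect_trans hy _; exact: connect1.
Qed.

Lemma side_partition a b : t a b -> forall x, x \in side t a b \/ x \in side t b a.
Proof.
move=> tab x; apply: (connect_ind_pred (P := fun x => x \in side t a b \/ x \in side t b a)) (tconn a x).
  by left; exact: side_root.
move=> y z _ Hy tyz.
case E: (((y == a) && (z == b)) || ((y == b) && (z == a))).
  case/orP: E => /andP[_ /eqP ->]; [right|left]; exact: side_root.
case: Hy => Hy; [left|right]; apply: side_step Hy _; rewrite /tdel /= tyz /=.
  by rewrite E.
by rewrite orbC E.
Qed.

Lemma leaf_side a b : t a b -> b \in codom phi -> forall x, x \in side t b a -> x = b.
Proof.
move=> tab bc x; rewrite inE.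
apply: (connect_ind_pred (P := fun x => x = b)) => // y z _ -> /andP[tbz].
rewrite eqxx /= => /norP[/negbTE zna _].
have := tdeg b; rewrite bc => /card_le1_eqP H.
have := H z a; rewrite !inE tbz tsym tab => /(_ isT isT) za.
by rewrite za eqxx in zna.
Qed.

Lemma sub_side a b c : t a b -> t b c -> c != a ->
  forall x, x \in side t c b -> x \in side t b a.
Proof.
move=> tab tbc cna x; rewrite inE.
have nab : a != b by apply: contraTneq tab => ->; rewrite tirr.
apply: (connect_ind_pred (P := fun x => x \in side t b a)).
  apply: side_step (side_root b a) _.
  by rewrite /tdel /= tbc eqxx (negbTE cna) /= eq_sym (negbTE nab).
move=> y z cy Hy e.
case E: (((y == b) && (z == a)) || ((y == a) && (z == b))).
  have tcb : t c b by rewrite tsym.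
  have := tbridge tcb; case/orP: E => /andP[/eqP ey /eqP ez].
    by move: cy; rewrite ey => ->.
  case/negP; apply: connect_trans cy _; apply: connect1.
  by rewrite ey /tdel /= tab eq_sym (negbTE cna) (negbTE nab).
apply: side_step Hy _; move: e; rewrite /tdel /= => /andP[-> _]; by rewrite E.
Qed.

Lemma notin_side_sub b c : t c b -> b \notin side t c b.
Proof. by move=> tcb; rewrite inE tbridge. Qed.

Lemma cover a b : t a b -> forall x, x \in side t b a ->
  x = b \/ exists c, [/\ t b c, c != a & x \in side t c b].
Proof.
move=> tab x; rewrite inE.
apply: (connect_ind_pred (P := fun x => x = b \/ exists c, [/\ t b c, c != a & x \in side t c b])).
  by left.
move=> y z _ [->|[c [tbc cna yc]]] /andP[tyz ne].
  right; exists z; split=> //; last exact: side_root.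
  by apply: contra ne => /eqP ->; rewrite !eqxx.
case E: (((y == c) && (z == b)) || ((y == b) && (z == c))).
  case/orP: E => /andP[/eqP ey /eqP ez]; first by left.
  by right; exists c; split=> //; rewrite ez side_root.
right; exists c; split=> //; apply: side_step yc _.
by rewrite /tdel /= tyz E.
Qed.

Variables (J : finType) (g : J -> V).
Hypothesis g_inj : injective g.

Definition wt (A : {set T}) := #|[set p : J | phi (g p) \in A]|.

Lemma wt_leaf b : b \in codom phi -> forall A : {set T}, (forall x, x \in A -> x = b) -> (wt A <= 1)%N.
Proof.
move=> _ A HA; apply/card_le1_eqP => p q; rewrite !inE => /HA hp /HA hq.
by apply: g_inj; apply: phi_inj; rewrite hp hq.
Qed.

Lemma balanced_claim s : (2 <= #|J|)%N -> forall a b, (#|side t b a| <= s)%N -> t a b ->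
  (2 * #|J| < 3 * wt (side t b a))%N ->
  exists a' b', t a' b' /\ (#|J| <= 3 * wt (side t a' b') <= 2 * #|J|)%N.
Proof.
move=> J2; elim: s => [|s IH] a b hs tab hw.
  by move: hs; rewrite leqn0 => /eqP/cards0_eq/setP/(_ b); rewrite side_root inE.
have tba : t b a by rewrite tsym.
case bc: (b \in codom phi).
  have := wt_leaf bc (leaf_side tab bc); lia.
have := tdeg b; rewrite bc => d3.
have : #|[set y | t b y] :\ a| == 2.
  move: d3; rewrite /degree (cardsD1 a) inE tba /= add1n => /eqP [->] //.
case/cards2P => c [d [cnd Ncd]].
have hc : c \in [set y | t b y] :\ a by rewrite Ncd !inE eqxx.
have hd : d \in [set y | t b y] :\ a by rewrite Ncd !inE eqxx orbT.
move: hc hd; rewrite !inE => /andP[cna tbc] /andP[dna tbd].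
have wsum : (wt (side t b a) <= wt (side t c b) + wt (side t d b))%N.
  rewrite /wt; apply: leq_trans (_ : #|[set p | phi (g p) \in side t c b] :|:
     [set p | phi (g p) \in side t d b]| <= _)%N; last by rewrite cardsU leq_subr.
  apply: subset_leq_card; apply/subsetP => p; rewrite inE => /(cover tab).
  case=> [eb|[e [tbe ena pe]]]; rewrite in_setU !in_set.
    by move: bc; rewrite -eb codom_f.
  have : e \in [set y | t b y] :\ a by rewrite !inE ena tbe.
  by rewrite Ncd !inE => /orP[/eqP ec|/eqP ec]; subst e; move: pe; rewrite inE => ->; rewrite ?orbT.
have smaller e : t b e -> e != a -> (#|side t e b| <= s)%N.
  move=> tbe ena; have : (#|side t e b| <= #|side t b a :\ b|)%N.
    apply: subset_leq_card; apply/subsetP => x hx; rewrite in_setD1.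
    rewrite (sub_side tab tbe ena hx) andbT.
    by apply: contraTneq hx => ->; rewrite notin_side_sub // tsym.
  by rewrite (cardsD1 b) side_root /= in hs; lia.
have good e : t b e -> e != a -> ~ (#|J| <= 3 * wt (side t e b) <= 2 * #|J|)%N ->
   (exists a' b', t a' b' /\ (#|J| <= 3 * wt (side t a' b') <= 2 * #|J|)%N) \/ (3 * wt (side t e b) < #|J|)%N.
  move=> tbe ena ng.
  case: (ltnP (2 * #|J|) (3 * wt (side t e b))) => h.
    by left; apply: (IH b e) => //; exact: smaller.
  by right; lia.
case: (boolP (#|J| <= 3 * wt (side t c b) <= 2 * #|J|)%N) => gc.
  by exists c, b; rewrite tsym.
case: (boolP (#|J| <= 3 * wt (side t d b) <= 2 * #|J|)%N) => gd.
  by exists d, b; rewrite tsym.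
case: (good c tbc cna (negP gc)) => // hc.
case: (good d tbd dna (negP gd)) => // hd.
lia.
Qed.

Lemma balanced_edge : (2 <= #|J|)%N ->
  exists a b, t a b /\ (#|J| <= 3 * wt (side t a b) <= 2 * #|J|)%N.
Proof.
move=> J2.
have [p0 [p1 [p01 _]]] : exists p0 p1 : J, p0 != p1 /\ true.
  move: J2; rewrite -(cardsT J) => /card_gt1P [p0 [p1 [_ _ ne]]]; by exists p0, p1.
have : connect t (phi (g p0)) (phi (g p1)) by [].
case/connectP => [[|b p]] /=.
  by move=> _ /phi_inj /g_inj /eqP; rewrite eq_sym (negbTE p01).
move=> /andP[tab _] _; set a := phi (g p0) in tab.
have cov : (#|J| <= wt (side t a b) + wt (side t b a))%N.
  rewrite /wt -(cardsT J); apply: leq_trans (_ : #|[set p | phi (g p) \in side t a b] :|: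
     [set p | phi (g p) \in side t b a]| <= _)%N; last by rewrite cardsU leq_subr.
  apply: subset_leq_card; apply/subsetP => q _; rewrite in_setU !(in_set (fun p => phi (g p) \in _)).
  by case: (side_partition tab (phi (g q))) => ->; rewrite ?orbT.
case: (ltnP (2 * #|J|) (3 * wt (side t b a))) => h1.
  exact: (balanced_claim J2 (leqnn _) tab h1).
case: (ltnP (2 * #|J|) (3 * wt (side t a b))) => h2.
  by apply: (balanced_claim J2 (leqnn _) _ h2); rewrite tsym.
case: (leqP #|J| (3 * wt (side t a b))) => h3.
  by exists a, b; rewrite tab h3 h2.
exists b, a; rewrite tsym tab h1 andbT; lia.
Qed.

End Tree.

Lemma rw_from_balanced (V : finType) (adj : rel V) (J : finType) (g : J -> V) n :
  injective g -> (2 <= #|J|)%N ->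
  (forall X : {set V}, (#|J| <= 3 * #|[set p | g p \in X]| <= 2 * #|J|)%N ->
     (n <= cutrank adj X)%N) ->
  rw_ge adj n.
Proof.
move=> ginj J2 H T t phi [[tsym tirr] tconn tbr phiinj tdeg].
have [a [b [tab hb]]] := balanced_edge tsym tirr tconn tbr phiinj tdeg ginj J2.
rewrite /rd_width.
apply: leq_trans (leq_bigmax_cond (a, b) tab).
apply: H; move: hb; rewrite /wt.
suff -> : [set p | phi (g p) \in side t a b] = [set p | g p \in [set v | phi v \in side t a b]] by [].
by apply/setP => p; rewrite !inE.
Qed.

End MTree.
Import MTree.

Module MRank.
Local Open Scope ring_scope.

Lemma rank_sub (R : fieldType) m n N (M : 'M[R]_(m, n)) (f g : 'I_N -> _) :
  (\rank (\matrix_(a < N, b < N) M (f a) (g b)) <= \rank M)%N.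
Proof.
have -> : \matrix_(a < N, b < N) M (f a) (g b) = rowsub f 1%:M *m (M *m colsub g 1%:M).
  rewrite mulmx_colsub mulmx1 -rowsubE; apply/matrixP => a b; by rewrite !mxE.
apply: leq_trans (mxrankM_maxr _ _) _; exact: mxrankM_maxl.
Qed.

Lemma rank_lower (R : fieldType) N (B : 'M[R]_N) :
  (forall a, B a a = 1) -> (forall a b : 'I_N, (a < b)%N -> B a b = 0) -> \rank B = N.
Proof.
move=> Hd Hl; apply: mxrank_unit; rewrite unitmxE det_trig; last by apply/is_trig_mxP.
by rewrite big1 ?unitr1 // => a _; rewrite Hd.
Qed.

Lemma rank_JI n : \rank (\matrix_(a < (2 * n)%N, b < (2 * n)%N) ((a != b)%:R : 'F_2)) = (2 * n)%N.
Proof.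
set B := \matrix_(a, b) _.
have BB : B *m B = 1%:M.
  apply/matrixP => a c; rewrite !mxE.
  rewrite (eq_bigr (fun b => ((b != a) && (b != c))%:R)); last first.
    by move=> b _; rewrite !mxE -natrM mulnb eq_sym.
  rewrite -natr_sum.
  rewrite (eq_bigr (fun i => if (i != a) && (i != c) then 1%N else 0%N)); last by move=> i _; case: ifP.
  rewrite -big_mkcond sum1dep_card.
  have -> : [set x | (x != a) && (x != c)] = ~: [set a; c].
    by apply/setP => x; rewrite !inE negb_or.
  have := cardsC [set a; c]; rewrite card_ord cards2 => E.
  have n0 : (0 < n)%N by have := ltn_ord a; lia.
  have two0 : (2%:R : 'F_2) = 0 by apply: val_inj.
  case: (eqVneq a c) => [ac|ac] /=; [subst a|].
    rewrite eqxx in E; have -> : #|~: [set c; c]| = (2 * (n - 1) + 1)%N by lia.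
    by rewrite natrD natrM two0 mul0r add0r.
  rewrite ac in E; have -> : #|~: [set a; c]| = (2 * (n - 1))%N by lia.
  by rewrite natrM two0 mul0r ?(negbTE ac).
have [BU _] := mulmx1_unit BB.
exact: mxrank_unit.
Qed.

Lemma cutrank_ge (V : finType) (adj : rel V) (X : {set V}) N (u v : 'I_N -> V) :
  (forall a, u a \in X) -> (forall b, v b \notin X) ->
  (\rank (\matrix_(a < N, b < N) ((adj (u a) (v b) : nat)%:R : 'F_2)) <= cutrank adj X)%N.
Proof.
move=> uX vX.
have vX' : forall b, v b \in ~: X by move=> b; rewrite inE vX.
rewrite /cutrank.
apply: leq_trans _ (rank_sub _ (fun a => enum_rank_in (uX a) (u a)) (fun b => enum_rank_in (vX' b) (v b))).
rewrite leq_eqVlt; apply/orP; left; apply/eqP; congr (\rank _).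
apply/matrixP => a b; rewrite !mxE !enum_rankK_in //.
Qed.

End MRank.
Import MRank.

Module MAux.

Lemma ivt (P : nat -> bool) lo d : P lo -> ~~ P (lo + d) ->
  exists t, (t < d)%N /\ P (lo + t) /\ ~~ P (lo + t).+1.
Proof.
move=> Plo; elim: d => [|d IH]; first by rewrite addn0 Plo.
case Pd: (P (lo + d)) => Pd1.
  by exists d; rewrite Pd -addnS.
have [t [td [H1 H2]]] := IH (negbT Pd); exists t; split => //; exact: ltnW.
Qed.

Lemma enum_incr m N (R : {set 'I_m}) (H : (N <= #|R|)%N) (a b : 'I_N) :
  (a < b)%N -> (val (enum_val (widen_ord H a)) < val (enum_val (widen_ord H b)))%N.
Proof.
move=> ab.
have so : sorted (relpre val ltn) (enum R).
  rewrite /enum_mem; apply: sorted_filter; first by move=> x y z /= ; apply: ltn_trans.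
  by rewrite -enumT -sorted_map val_enum_ord iota_ltn_sorted.
have x0 : 'I_m.
  exact: (enum_val (widen_ord H a)).
rewrite !(enum_val_nth x0).
apply: (sorted_ltn_nth (leT := relpre val ltn)) => //.
- by move=> x y z /=; apply: ltn_trans.
- by rewrite inE -cardE (leq_trans (ltn_ord a) H).
- by rewrite inE -cardE (leq_trans (ltn_ord b) H).
Qed.

Lemma pigeon (A B : finType) (f : A -> B) c : (#|B| * c < #|A|)%N ->
  exists b, (c < #|[set a | f a == b]|)%N.
Proof.
move=> H; apply/existsP; apply: contraLR H; rewrite negb_exists => /forallP H.
rewrite -leqNgt -sum1_card (partition_big f predT) //=.
rewrite -sum_nat_const; apply: leq_sum => b _.
by rewrite sum1dep_card; have := H b; rewrite -leqNgt.
Qed.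

End MAux.
Import MAux.

Module MComb.

Section Comb.
Variables (V : finType) (adj : rel V) (e n : nat) (xv : nat -> nat -> V)
  (pat : nat -> nat -> bool).
Local Notation k := (2 * e).+1.
Hypothesis n0 : (0 < n)%N.
Hypothesis eBig : (3 * n <= e.+1)%N.
Hypothesis mBig : (4 * n * n <= k)%N.
Hypothesis F1 : forall j i i', (j < k)%N -> ~~ odd j -> (i < k)%N -> (i' < k)%N -> i != i' ->
  adj (xv j i) (xv j i').
Hypothesis F2 : forall j i j' i', (j < k)%N -> (i < k)%N -> (j' < k)%N -> (i' < k)%N ->
  (j.+2 <= j')%N || (j'.+2 <= j)%N -> adj (xv j i) (xv j' i') = false.
Hypothesis F3a : forall t i i', (t.+1 < k)%N -> (i < k)%N -> (i' < k)%N ->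
  adj (xv t i) (xv t.+1 i') = pat i i'.
Hypothesis F3b : forall t i i', (t.+1 < k)%N -> (i < k)%N -> (i' < k)%N ->
  adj (xv t.+1 i) (xv t i') = pat i' i.
Hypothesis PR : forall r : 'I_(2 * n) -> nat, (forall a b : 'I_(2 * n), (a < b)%N -> (r a < r b)%N) ->
  (n <= \rank (\matrix_(a < 2 * n, b < 2 * n) ((pat (r a) (r b) : nat)%:R : 'F_2))%R)%N /\
  (n <= \rank (\matrix_(a < 2 * n, b < 2 * n) ((pat (r b) (r a) : nat)%:R : 'F_2))%R)%N.

Definition gJ (p : 'I_e.+1 * 'I_k) := xv (2 * p.1) p.2.

Lemma comb (X : {set V}) :
  (#|{: 'I_e.+1 * 'I_k}| <= 3 * #|[set p | gJ p \in X]| <= 2 * #|{: 'I_e.+1 * 'I_k}|)%N ->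
  (n <= cutrank adj X)%N.
Proof.
move=> HX.
have cJ : #|{: 'I_e.+1 * 'I_k}| = (e.+1 * k)%N by rewrite card_prod !card_ord.
rewrite cJ in HX.
pose inx j i := xv j i \in X.
pose monoin (x : 'I_e.+1) := [forall i : 'I_k, inx (2 * x)%N i].
pose monoout (x : 'I_e.+1) := [forall i : 'I_k, ~~ inx (2 * x)%N i].
pose Split := [set x | ~~ monoin x && ~~ monoout x].
have xk (x : 'I_e.+1) : (2 * x < k)%N by have := ltn_ord x; lia.
case: (leqP n #|Split|) => hS.
  have : forall x : 'I_e.+1, exists i : 'I_k, (x \in Split) ==> inx (2 * x)%N i.
    move=> x; case: (boolP (x \in Split)); last by exists ord0.
    rewrite inE => /andP[_ /forallPn [i hi]]; exists i; by rewrite negbK in hi.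
  case/fin_all_exists => fin Hfin.
  have : forall x : 'I_e.+1, exists i : 'I_k, (x \in Split) ==> ~~ inx (2 * x)%N i.
    move=> x; case: (boolP (x \in Split)); last by exists ord0.
    rewrite inE => /andP[/forallPn [i hi] _]; by exists i.
  case/fin_all_exists => fout Hfout.
  pose sp (a : 'I_n) : 'I_e.+1 := enum_val (A := Split) (widen_ord hS a).
  have spS a : sp a \in Split by apply: enum_valP.
  have spI : injective sp by move=> a b /enum_val_inj /(congr1 val) /= /val_inj.
  pose u a := xv (2 * sp a)%N (fin (sp a)).
  pose v b := xv (2 * sp b)%N (fout (sp b)).
  have uX a : u a \in X by have := Hfin (sp a); rewrite spS.
  have vX b : v b \notin X by have := Hfout (sp b); rewrite spS.
  apply: leq_trans (cutrank_ge adj uX vX).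
  rewrite rank_lower //.
    move=> a; rewrite mxE F1 //; first by rewrite mul2n odd_double.
    by apply: contraNneq (vX a) => /val_inj E; rewrite /v -E; apply: uX.
  move=> a b ab; rewrite mxE F2 //.
  have : sp a != sp b by apply: contraTneq ab => /spI ->; rewrite ltnn.
  rewrite -val_eqE /=; lia.
have cSplitRows : #|[set p : 'I_e.+1 * 'I_k | p.1 \in Split]| = (#|Split| * k)%N.
  have -> : [set p : 'I_e.+1 * 'I_k | p.1 \in Split] = setX Split setT.
    by apply/setP => p; rewrite !inE andbT.
  by rewrite cardsX cardsT card_ord.
have compl : (#|[set p | gJ p \in X]| + #|[set p | gJ p \notin X]| = e.+1 * k)%N.
  rewrite -cJ -(cardsC [set p | gJ p \in X]); congr (_ + _)%N.
  by apply: eq_card => p; rewrite !inE.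
have Sk : (#|Split| * k <= (n - 1) * k)%N by apply: leq_mul => //; lia.
have exout : exists x, monoout x.
  case: (pickP monoout) => [x hx|hno]; first by exists x.
  exfalso.
  have : (#|[set p | gJ p \notin X]| <= #|[set p : 'I_e.+1 * 'I_k | p.1 \in Split]|)%N.
    apply: subset_leq_card; apply/subsetP => p; rewrite !inE => hp.
    rewrite hno andbT; apply/forallPn; exists p.2; exact: hp.
  rewrite cSplitRows => h.
  have : (3 * n * k <= 3 * (n - 1) * k)%N.
    apply: leq_trans (_ : e.+1 * k <= _)%N; first by apply: leq_mul.
    nia.
  have k0 : (0 < k)%N by [].
  nia.
have exin : exists x, monoin x.
  case: (pickP monoin) => [x hx|hno]; first by exists x.
  exfalso.
  have : (#|[set p | gJ p \in X]| <= #|[set p : 'I_e.+1 * 'I_k | p.1 \in Split]|)%N.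
    apply: subset_leq_card; apply/subsetP => p; rewrite !inE => hp.
    rewrite hno /=; apply/forallPn; exists p.2; by rewrite negbK.
  rewrite cSplitRows => h.
  have : (3 * n * k <= 3 * (n - 1) * k)%N.
    apply: leq_trans (_ : e.+1 * k <= _)%N; first by apply: leq_mul.
    nia.
  have k0 : (0 < k)%N by [].
  nia.
have not_both x : monoin x -> monoout x -> False.
  move=> /forallP /(_ ord0) h1 /forallP /(_ ord0); by rewrite h1.
case: exin => x0 hx0; case: exout => x1 hx1.
pose P (q : 'I_e.+1 * 'I_e.+1) := monoin q.1 && monoout q.2.
pose d (q : 'I_e.+1 * 'I_e.+1) := ((q.1 - q.2) + (q.2 - q.1))%N.
have Pq0 : P (x0, x1) by rewrite /P hx0 hx1.
case: (arg_minnP d Pq0) => [[e0 e1]] /andP [/= h0 h1] hmin.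
have e01 : (e0 : nat) != e1.
  by apply/negP => /eqP /val_inj E; subst e1; apply: (not_both e0).
have between (x : 'I_e.+1) : (minn e0 e1 < x < maxn e0 e1)%N -> x \in Split.
  move=> hx; rewrite inE; apply/andP; split; apply/negP => hm.
    have := hmin (x, e1); rewrite /P /= hm h1 /d /= => /(_ isT).
    move: hx; lia.
  have := hmin (e0, x); rewrite /P /= hm h0 /d /= => /(_ isT).
  move: hx; lia.
have dn : (d (e0, e1) <= n)%N.
  rewrite leqNgt; apply/negP => hd.
  pose f (a : 'I_n) : 'I_e.+1 := inord (minn e0 e1 + a + 1).
  have fv (a : 'I_n) : f a = minn e0 e1 + a + 1 :> nat.
    rewrite inordK //; move: hd; rewrite /d /=; have := ltn_ord e0; have := ltn_ord e1;
    have := ltn_ord a; lia.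
  have finj : injective f.
    move=> a b /(congr1 (@nat_of_ord _)); rewrite !fv => h; apply: val_inj => /=; lia.
  have : (#|[set f a | a in 'I_n]| <= #|Split|)%N.
    apply: subset_leq_card; apply/subsetP => y /imsetP [a _ ->].
    apply: between; rewrite fv; move: hd; rewrite /d /=; have := ltn_ord a;
    lia.
  rewrite card_imset // card_ord; lia.
set dd := d (e0, e1) in dn.
pose lo := (2 * minn e0 e1)%N.
pose dir := (e0 < e1)%N.
have hik : (lo + 2 * dd <= 2 * e)%N.
  rewrite /lo /dd /d /=; have := ltn_ord e0; have := ltn_ord e1; lia.
pose cr (i : 'I_k) (t : 'I_(2 * n)) := (t < 2 * dd)%N &&
  (if dir then inx (lo + t)%N i && ~~ inx (lo + t).+1 i else ~~ inx (lo + t)%N i && inx (lo + t).+1 i).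
have : forall i : 'I_k, exists t : 'I_(2 * n), cr i t.
  move=> i.
  have [t [td [H1 H2]]] : exists t, (t < 2 * dd)%N /\
      (if dir then inx (lo + t)%N i else ~~ inx (lo + t)%N i) /\
      ~~ (if dir then inx (lo + t).+1 i else ~~ inx (lo + t).+1 i).
    apply: (ivt (P := fun j => if dir then inx j i else ~~ inx j i)).
      rewrite /dir /lo; case: ltnP => h.
        by move/forallP: h0 => /(_ i).
      by move/forallP: h1 => /(_ i).
    rewrite /dir /lo /dd /d /=; case: ltnP => h.
      have -> : (2 * e0 + 2 * (e0 - e1 + (e1 - e0)) = 2 * e1)%N by lia.
      by move/forallP: h1 => /(_ i).
    have -> : (2 * e1 + 2 * (e0 - e1 + (e1 - e0)) = 2 * e0)%N by lia.
    by rewrite negbK; move/forallP: h0 => /(_ i).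
  have tn : (t < 2 * n)%N by lia.
  exists (Ordinal tn); rewrite /cr /= td /=.
  move: H1 H2; case: (boolP dir) => hd; rewrite ?(negbTE hd) ?hd /= => -> //; by rewrite ?negbK.
case/fin_all_exists => cls Hcls.
have [t Ht] : exists t : 'I_(2 * n), (2 * n - 1 < #|[set i | cls i == t]|)%N.
  apply: pigeon; rewrite !card_ord; nia.
set R := [set i | cls i == t] in Ht.
have hR : (2 * n <= #|R|)%N by lia.
pose r (a : 'I_(2 * n)) := val (enum_val (A := R) (widen_ord hR a)).
have rinc : forall a b : 'I_(2 * n), (a < b)%N -> (r a < r b)%N by move=> a b; apply: enum_incr.
have rk a : (r a < k)%N by exact: ltn_ord.
have rcr a : cr (enum_val (A := R) (widen_ord hR a)) t.
  have := enum_valP (widen_ord hR a); rewrite inE => /eqP <-; exact: Hcls.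
have n2 : (0 < 2 * n)%N by lia.
have tlt : ((lo + t).+1 < k)%N.
  by have := rcr (Ordinal n2); rewrite /cr => /andP[h _]; lia.
have [PR1 PR2] := PR rinc.
case: (boolP dir) => hd.
  pose u a := xv (lo + t)%N (r a).
  pose v b := xv (lo + t).+1 (r b).
  have uX a : u a \in X by have := rcr a; rewrite /cr hd => /andP[_ /andP[]].
  have vX b : v b \notin X by have := rcr b; rewrite /cr hd => /andP[_ /andP[]].
  apply: leq_trans (cutrank_ge adj uX vX).
  apply: leq_trans PR1 _; rewrite leq_eqVlt; apply/orP; left; apply/eqP; congr (\rank _).
  by apply/matrixP => a b; rewrite !mxE /u /v F3a.
pose u a := xv (lo + t).+1 (r a).
pose v b := xv (lo + t)%N (r b).
have uX a : u a \in X by have := rcr a; rewrite /cr (negbTE hd) => /andP[_ /andP[]].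
have vX b : v b \notin X by have := rcr b; rewrite /cr (negbTE hd) => /andP[_ /andP[]].
apply: leq_trans (cutrank_ge adj uX vX).
apply: leq_trans PR2 _; rewrite leq_eqVlt; apply/orP; left; apply/eqP; congr (\rank _).
by apply/matrixP => a b; rewrite !mxE /u /v F3b.
Qed.

Hypothesis xinj : forall j i j' i', (j < k)%N -> (i < k)%N -> (j' < k)%N -> (i' < k)%N ->
  xv j i = xv j' i' -> j = j' /\ i = i'.

Lemma comb_rw : rw_ge adj n.
Proof.
apply: (rw_from_balanced (g := gJ)).
- move=> [p1 p2] [q1 q2]; rewrite /gJ /= => /xinj [].
  + by have := ltn_ord p1; lia.
  + exact: ltn_ord.
  + by have := ltn_ord q1; lia.
  + exact: ltn_ord.
  move=> h1 /val_inj ->; congr (_, _); apply: val_inj => /=; lia.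
- rewrite card_prod !card_ord; nia.
- exact: comb.
Qed.

End Comb.

End MComb.
Import MComb.


Definition gform (sel : nat -> bool) (pat : nat -> nat -> bool) (j i j' i' : nat) :=
  [|| (j.+1 == j') && pat i i', (j'.+1 == j) && pat i' i,
      (j == j') && (i != i') && sel j | (j' == j) && (i' != i) && sel j'].

Section Gen.
Variables (V : finType) (adj : rel V) (e n : nat) (xv : nat -> nat -> V)
  (pat : nat -> nat -> bool) (sel : nat -> bool).
Local Notation k := (2 * e).+1.
Hypothesis n0 : (0 < n)%N.
Hypothesis eBig : (3 * n <= e.+1)%N.
Hypothesis mBig : (4 * n * n <= k)%N.
Hypothesis selE : forall j, ~~ odd j -> sel j.
Hypothesis Hadj : forall j i j' i', (j < k)%N -> (i < k)%N -> (j' < k)%N -> (i' < k)%N ->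
  adj (xv j i) (xv j' i') = gform sel pat j i j' i'.
Hypothesis PR : forall r : 'I_(2 * n) -> nat, (forall a b : 'I_(2 * n), (a < b)%N -> (r a < r b)%N) ->
  (n <= \rank (\matrix_(a < 2 * n, b < 2 * n) ((pat (r a) (r b) : nat)%:R : 'F_2))%R)%N /\
  (n <= \rank (\matrix_(a < 2 * n, b < 2 * n) ((pat (r b) (r a) : nat)%:R : 'F_2))%R)%N.
Hypothesis xinj : forall j i j' i', (j < k)%N -> (i < k)%N -> (j' < k)%N -> (i' < k)%N ->
  xv j i = xv j' i' -> j = j' /\ i = i'.

Lemma gen_rw : rw_ge adj n.
Proof.
apply: (@comb_rw V adj e n xv pat) => //.
- move=> j i i' jk od ik i'k ne; rewrite Hadj // /gform eqxx ne selE //=.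
  by rewrite !orbT.
- move=> j i j' i' jk ik j'k i'k h; rewrite Hadj // /gform.
  have -> : (j.+1 == j') = false by apply/negbTE; apply/eqP; lia.
  have -> : (j'.+1 == j) = false by apply/negbTE; apply/eqP; lia.
  have -> : (j == j') = false by apply/negbTE; apply/eqP; lia.
  have -> : (j' == j) = false by apply/negbTE; apply/eqP; lia.
  by [].
- move=> t i i' tk ik i'k; rewrite Hadj //; last lia.
  rewrite /gform eqxx /=.
  have -> : (t.+2 == t) = false by apply/negbTE; apply/eqP; lia.
  have -> : (t == t.+1) = false by apply/negbTE; apply/eqP; lia.
  have -> : (t.+1 == t) = false by apply/negbTE; apply/eqP; lia.
  by rewrite /= !orbF.
- move=> t i i' tk ik i'k; rewrite Hadj //; last lia.
  rewrite /gform eqxx /=.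
  have -> : (t.+2 == t) = false by apply/negbTE; apply/eqP; lia.
  have -> : (t == t.+1) = false by apply/negbTE; apply/eqP; lia.
  have -> : (t.+1 == t) = false by apply/negbTE; apply/eqP; lia.
  by rewrite /= !orbF.
Qed.

End Gen.

Section Incr.
Variables (N : nat) (r : 'I_N -> nat).
Hypothesis rinc : forall a b : 'I_N, (a < b)%N -> (r a < r b)%N.
Lemma r_eq a b : (r a == r b) = (a == b).
Proof.
case: (ltngtP a b) => h.
- have := rinc h; rewrite -val_eqE /=; lia.
- have := rinc h; rewrite -val_eqE /=; lia.
- by move/val_inj: h => ->; rewrite !eqxx.
Qed.
Lemma r_le a b : (r a <= r b)%N = (a <= b)%N.
Proof.
case: (ltngtP a b) => h.
- by rewrite ltnW // rinc.
- by apply/negbTE; rewrite -ltnNge rinc.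
- by move/val_inj: h => ->; rewrite !leqnn.
Qed.
End Incr.

Lemma PR_M n : forall r : 'I_(2 * n) -> nat, (forall a b : 'I_(2 * n), (a < b)%N -> (r a < r b)%N) ->
  (n <= \rank (\matrix_(a < 2 * n, b < 2 * n) (((r a == r b) : nat)%:R : 'F_2))%R)%N /\
  (n <= \rank (\matrix_(a < 2 * n, b < 2 * n) (((r b == r a) : nat)%:R : 'F_2))%R)%N.
Proof.
move=> r rinc.
have ne (a b : 'I_(2 * n)) : (a < b)%N -> (a == b) = false /\ (b == a) = false.
  by move=> ab; split; apply/negbTE; rewrite -val_eqE /=; lia.
split; rewrite rank_lower //; try lia.
- by move=> a; rewrite mxE eqxx.
- by move=> a b ab; rewrite mxE r_eq // (ne a b ab).1.
- by move=> a; rewrite mxE eqxx.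
- by move=> a b ab; rewrite mxE r_eq // (ne a b ab).2.
Qed.

Lemma PR_H n : forall r : 'I_(2 * n) -> nat, (forall a b : 'I_(2 * n), (a < b)%N -> (r a < r b)%N) ->
  (n <= \rank (\matrix_(a < 2 * n, b < 2 * n) (((r a <= r b)%N : nat)%:R : 'F_2))%R)%N /\
  (n <= \rank (\matrix_(a < 2 * n, b < 2 * n) (((r b <= r a)%N : nat)%:R : 'F_2))%R)%N.
Proof.
move=> r rinc; split.
  rewrite -mxrank_tr rank_lower; first lia.
    by move=> a; rewrite !mxE leqnn.
  by move=> a b ab; rewrite !mxE r_le // leqNgt ab.
rewrite rank_lower; first lia.
  by move=> a; rewrite !mxE leqnn.
by move=> a b ab; rewrite !mxE r_le // leqNgt ab.
Qed.

Lemma PR_A n : forall r : 'I_(2 * n) -> nat, (forall a b : 'I_(2 * n), (a < b)%N -> (r a < r b)%N) ->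
  (n <= \rank (\matrix_(a < 2 * n, b < 2 * n) (((r a != r b) : nat)%:R : 'F_2))%R)%N /\
  (n <= \rank (\matrix_(a < 2 * n, b < 2 * n) (((r b != r a) : nat)%:R : 'F_2))%R)%N.
Proof.
move=> r rinc.
have E1 : (\matrix_(a < 2 * n, b < 2 * n) (((r a != r b) : nat)%:R : 'F_2))%R =
          (\matrix_(a < 2 * n, b < 2 * n) (((a != b) : nat)%:R : 'F_2))%R.
  by apply/matrixP => a b; rewrite !mxE r_eq.
have E2 : (\matrix_(a < 2 * n, b < 2 * n) (((r b != r a) : nat)%:R : 'F_2))%R =
          (\matrix_(a < 2 * n, b < 2 * n) (((a != b) : nat)%:R : 'F_2))%R.
  by apply/matrixP => a b; rewrite !mxE r_eq // eq_sym.
by rewrite E1 E2 rank_JI; split; lia.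
Qed.

Definition xvg e (P : pred (vtx (2 * e).+1 (2 * e).+1))
  (HP : forall j i, P (inl (inl (j, i)))) (j i : nat) : QV P :=
  exist _ (inl (inl (inord j, inord i))) (HP (inord j) (inord i)).

Lemma xvg_inj e P HP j i j' i' : (j < (2 * e).+1)%N -> (i < (2 * e).+1)%N ->
  (j' < (2 * e).+1)%N -> (i' < (2 * e).+1)%N ->
  @xvg e P HP j i = xvg HP j' i' -> j = j' /\ i = i'.
Proof.
move=> jk ik j'k i'k /(congr1 val) /= [] /(congr1 val) hj /(congr1 val) hi.
by move: hj hi; rewrite /= !inordK.
Qed.

Lemma orb4 a b c d : (a || c) || (b || d) = [|| a, b, c | d].
Proof. by case: a; case: b; case: c; case: d. Qed.

Section Graphs.
Variable e : nat.
Local Notation k := (2 * e).+1.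

Lemma adj_MKK HP j i j' i' : (j < k)%N -> (i < k)%N -> (j' < k)%N -> (i' < k)%N ->
  Q_MKK k k (xvg HP j i) (xvg HP j' i') = gform predT (fun i i' => i == i') j i j' i'.
Proof.
move=> jk ik j'k i'k.
rewrite /Q_MKK /Qadj /E_MKK /layer_e /clique_e /= -!val_eqE /= !inordK //.
by rewrite orb4 /gform !andbT.
Qed.

Lemma adj_HKK HP j i j' i' : (j < k)%N -> (i < k)%N -> (j' < k)%N -> (i' < k)%N ->
  Q_HKK k k (xvg HP j i) (xvg HP j' i') = gform predT (fun i i' => (i <= i')%N) j i j' i'.
Proof.
move=> jk ik j'k i'k.
rewrite /Q_HKK /Qadj /E_HKK /layer_e /clique_e /= -!val_eqE /= !inordK //.
by rewrite orb4 /gform !andbT.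
Qed.

Lemma adj_MKI HP j i j' i' : (j < k)%N -> (i < k)%N -> (j' < k)%N -> (i' < k)%N ->
  Q_MKI k k (xvg HP j i) (xvg HP j' i') = gform (fun j => ~~ odd j) (fun i i' => i == i') j i j' i'.
Proof.
move=> jk ik j'k i'k.
rewrite /Q_MKI /Qadj /E_MKI /layer_e /clique_e /= -!val_eqE /= !inordK //.
by rewrite orb4 /gform.
Qed.

Lemma adj_AKK HP j i j' i' : (j < k)%N -> (i < k)%N -> (j' < k)%N -> (i' < k)%N ->
  Q_AKK k k (xvg HP j i) (xvg HP j' i') = gform predT (fun i i' => i != i') j i j' i'.
Proof.
move=> jk ik j'k i'k.
rewrite /Q_AKK /Qadj /E_AKK /layer_e /clique_e /z_e /= -!val_eqE /= !inordK //.
by rewrite !orbF orb4 /gform !andbT.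
Qed.

End Graphs.

Theorem lemma8p7 :
  exists f : nat -> nat, forall n : nat, (0 < n)%N ->
    [/\ rw_ge (Q_MKI (f n) (f n)) n,
        rw_ge (Q_MKK (f n) (f n)) n,
        rw_ge (Q_AKK (f n) (f n)) n &
        rw_ge (Q_HKK (f n) (f n)) n].
Proof.
exists (fun n => (2 * (4 * n * n)).+1) => n n0.
set e := (4 * n * n)%N.
have eBig : (3 * n <= e.+1)%N by rewrite /e; nia.
have mBig : (4 * n * n <= (2 * e).+1)%N by rewrite /e; lia.
split.
{ pose HP := (fun j i => isT) : forall j i, @inV_KI (2 * e).+1 (2 * e).+1 (inl (inl (j, i))).
  apply: (@gen_rw _ _ e n (xvg HP) (fun i i' => i == i') (fun j => ~~ odd j)) => //.
  all: try exact: PR_M.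
  all: move=> j i j' i' jk ik j'k i'k.
  exact: (@adj_MKI e HP j i j' i' jk ik j'k i'k).
  exact: (@xvg_inj e _ HP j i j' i' jk ik j'k i'k). }
{ pose HP := (fun j i => isT) : forall j i, @inV_noz (2 * e).+1 (2 * e).+1 (inl (inl (j, i))).
  apply: (@gen_rw _ _ e n (xvg HP) (fun i i' => i == i') predT) => //.
  all: try exact: PR_M.
  all: move=> j i j' i' jk ik j'k i'k.
  exact: (@adj_MKK e HP j i j' i' jk ik j'k i'k).
  exact: (@xvg_inj e _ HP j i j' i' jk ik j'k i'k). }
{ pose HP := (fun j i => isT) : forall j i, @inV_A (2 * e).+1 (2 * e).+1 (inl (inl (j, i))).
  apply: (@gen_rw _ _ e n (xvg HP) (fun i i' => i != i') predT) => //.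
  all: try exact: PR_A.
  all: move=> j i j' i' jk ik j'k i'k.
  exact: (@adj_AKK e HP j i j' i' jk ik j'k i'k).
  exact: (@xvg_inj e _ HP j i j' i' jk ik j'k i'k). }
{ pose HP := (fun j i => isT) : forall j i, @inV_noz (2 * e).+1 (2 * e).+1 (inl (inl (j, i))).
  apply: (@gen_rw _ _ e n (xvg HP) (fun i i' => (i <= i')%N) predT) => //.
  all: try exact: PR_H.
  all: move=> j i j' i' jk ik j'k i'k.
  exact: (@adj_HKK e HP j i j' i' jk ik j'k i'k).
  exact: (@xvg_inj e _ HP j i j' i' jk ik j'k i'k). }
Qed.
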